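(* Let $n\geqslant 3$ and $m\geqslant 1$ be integers, let $I_m=(i_1,\ldots,i_m)$ be a vector of $m$ pairwise different elements of $\{1,\ldots,n\}$, and let $P_m=((j_1,k_1),\ldots,(j_m,k_m))$ be a vector of $m$ pairs formed by $2m$ pairwise different elements of $\{2,\ldots,n\}$. Then the function $f_{I_m}^{P_m}$ is an eigenfunction of the Star graph $S_n$ with eigenvalue $n-m-1$.
   Context: Write a permutation $\pi$ of $\{1,\ldots,n\}$ as the sequence $[\pi_1\pi_2\ldots\pi_n]$. The Star graph $S_n$ has vertex set $\mathrm{Sym}_n$, and two permutations are adjacent iff one is obtained from the other by exchanging the entries in positions $1$ and $i$ for some $2\leqslant i\leqslant n$ (this is the Cayley graph of $\mathrm{Sym}_n$ generated by the transpositions $(1\ i)$, $2\le i\le n$). For a graph $\Gamma$, a function $f:V(\Gamma)\to\mathbb{R}$ is an eigenfunction with eigenvalue $\theta$ if $f\not\equiv 0$ and $\theta f(x)=\sum_{y\in N(x)}f(y)$ for every vertex $x$, where $N(x)$ is the neighbourhood of $x$. The function $f_{I_m}^{P_m}:\mathrm{Sym}_n\to\mathbb{R}$ is defined as follows: $f_{I_m}^{P_m}(\pi)=0$ if there is $t\in\{1,\ldots,m\}$ with $\pi_{j_t}\ne i_t$ and $\pi_{k_t}\ne i_t$; otherwise, for each $t$ exactly one of $\pi_{j_t}=i_t$, $\pi_{k_t}=i_t$ holds, and setting $x_t=1$ if $\pi_{j_t}=i_t$ and $x_t=0$ if $\pi_{k_t}=i_t$, one puts $f_{I_m}^{P_m}(\pi)=1$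 if $(x_1,\ldots,x_m)$ contains an even number of $1$s and $f_{I_m}^{P_m}(\pi)=-1$ if it contains an odd number of $1$s. *)

(* Defs.v *)
From HB Require Import structures.
From mathcomp Require Import all_boot all_order all_algebra all_fingroup.
From mathcomp Require Import reals.
Set Implicit Arguments. Unset Strict Implicit. Unset Printing Implicit Defensive.
Import Order.TTheory GRing.Theory Num.Theory.
Local Open Scope ring_scope.

(* Permutations of {1,...,n} are encoded as s : 'S_n = {perm 'I_n}, both
   positions and values shifted down by one: s p is the entry at position p+1,
   representing the value (s p)+1.  Position 1 is the ordinal with value 0. *)

(* Star graph adjacency: y is obtained from x by exchanging the entries in
   positions 1 and i (i >= 2), i.e. y p = x (tperm p1 pi p). *)
Definition star_adj (n : nat) : rel 'S_n :=
  fun x y => [exists p1 : 'I_n, exists pi : 'I_n,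
    [&& nat_of_ord p1 == 0%N, nat_of_ord pi != 0%N & y == (tperm p1 pi * x)%g]].

Definition is_eigenfunction (R : numDomainType) (T : finType) (adj : rel T)
    (f : T -> R) (theta : R) : Prop :=
  (exists x, f x != 0) /\
  (forall x, theta * f x = \sum_(y | adj x y) f y).

Definition fIP (R : numDomainType) (n m : nat) (i j k : 'I_m -> 'I_n)
    (s : 'S_n) : R :=
  if [exists t : 'I_m, (s (j t) != i t) && (s (k t) != i t)] then 0
  else (-1) ^+ #|[set t : 'I_m | s (j t) == i t]|.

(* Main.v *)
Require Import Defs.
From HB Require Import structures.
From mathcomp Require Import all_boot all_order all_algebra all_fingroup.
From mathcomp Require Import reals.
From mathcomp Require Import ring.
Import Order.TTheory GRing.Theory Num.Theory.
Local Open Scope ring_scope.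

Section S.
Variable (R : realType) (n m : nat) (i j k : 'I_m -> 'I_n).

Definition Fv (it b c : 'I_n) : R :=
  if b == it then -1 else if c == it then 1 else 0.

Lemma Fv_sum it a b c : a != b -> a != c -> b != c ->
  Fv it a c + Fv it b a = Fv it b c.
Proof.
rewrite /Fv => ab ac bc.
case: (eqVneq b it) => [<-|bi]; first by rewrite (negbTE ab) eq_sym (negbTE bc) add0r.
case: (eqVneq a it) => [ai|ai]; last by rewrite addr0.
move: ac; rewrite ai => ac; by rewrite eq_sym (negbTE ac) addrC subrr.
Qed.

Lemma fIP_prod s : fIP R i j k s = \prod_t Fv (i t) (s (j t)) (s (k t)).
Proof.
rewrite /fIP; case: ifPn => [/existsP [t /andP[h1 h2]] | /existsPn H].
  by rewrite (bigD1 t) //= /Fv (negbTE h1) (negbTE h2) mul0r.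
rewrite (eq_bigr (fun t => if t \in [set t | s (j t) == i t] then -1 else 1)).
  by rewrite -big_mkcond /= prodr_const.
move=> t _; rewrite inE /Fv; case: ifP => // h.
by move: (H t); rewrite h /= negbK => ->.
Qed.


Hypothesis hi : injective i.
Hypothesis hj : injective j.
Hypothesis hk : injective k.
Hypothesis hjk : forall t t', j t != k t'.
Hypothesis n0 : (0 < n)%N.
Hypothesis hj0 : forall t, nat_of_ord (j t) != 0%N.
Hypothesis hk0 : forall t, nat_of_ord (k t) != 0%N.

Let p0 : 'I_n := Ordinal n0.

Lemma nj t : p0 != j t.
Proof. by apply/eqP=> h; move: (hj0 t); rewrite -h. Qed.
Lemma nk t : p0 != k t.
Proof. by apply/eqP=> h; move: (hk0 t); rewrite -h. Qed.

Lemma witness : exists s : 'S_n, forall t, s (j t) = i t.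
Proof.
suff H : forall r, (r <= m)%N -> exists s : 'S_n, forall t : 'I_m, (t < r)%N -> s (j t) = i t.
  by have [s Hs] := H m (leqnn m); exists s => t; apply: Hs.
elim=> [|r IH] hr; first by exists 1%g.
have [s Hs] := IH (ltnW hr).
pose t0 : 'I_m := Ordinal hr.
exists (s * tperm (s (j t0)) (i t0))%g => t ht; rewrite permM.
case: (eqVneq t t0) => [->|ne]; first by rewrite tpermL.
have htr : (t < r)%N.
  rewrite ltnS leq_eqVlt in ht; case/orP: ht => // /eqP h.
  by case/eqP: ne; apply: val_inj.
rewrite (Hs t htr) tpermD //.
  by rewrite -(Hs t htr) (inj_eq perm_inj) (inj_eq hj) eq_sym.
by rewrite (inj_eq hi) eq_sym.
Qed.

Lemma nbr_sum (f : 'S_n -> R) x :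
  \sum_(y | star_adj x y) f y = \sum_(p | p != p0) f (tperm p0 p * x)%g.
Proof.
have inj : {in [pred p | p != p0] &, injective (fun p => tperm p0 p * x)%g}.
  move=> p q _ _ /mulIg h.
  by rewrite -[p](tpermL p0 p) h tpermL.
transitivity (\sum_(p in [pred p | p != p0]) f (tperm p0 p * x)%g); last first.
  by apply: eq_bigl.
rewrite -(big_imset _ inj); apply: eq_bigl => y.
apply/existsP/imsetP.
- case=> p1 /existsP [pi /and3P [h1 h2 /eqP ->]].
  have -> : p1 = p0 by apply: val_inj; apply/eqP.
  exists pi => //; rewrite inE.
- case=> p hp ->; exists p0; apply/existsP; exists p.
  apply/and3P; split; [by [] | | by []].
  by apply: contra hp => /eqP h; apply/eqP/val_inj; exact: h.
Qed.

Lemma step_other (x : 'S_n) p : (forall t, j t != p) -> (forall t, k t != p) ->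
  fIP R i j k (tperm p0 p * x)%g = fIP R i j k x.
Proof.
move=> Hj Hk; rewrite !fIP_prod; apply: eq_bigr => t _.
by rewrite !permM !tpermD // ?nj ?nk // eq_sym.
Qed.

Lemma step_pair (x : 'S_n) t :
  fIP R i j k (tperm p0 (j t) * x)%g + fIP R i j k (tperm p0 (k t) * x)%g
  = fIP R i j k x.
Proof.
have D (F : 'I_m -> R) : \prod_s F s = F t * \prod_(s | s != t) F s.
  by rewrite (bigD1 t).
rewrite !fIP_prod !D.
set G := \prod_(s | s != t) Fv (i s) (x (j s)) (x (k s)).
have E1 : \prod_(s | s != t) Fv (i s) ((tperm p0 (j t) * x)%g (j s))
    ((tperm p0 (j t) * x)%g (k s)) = G.
  apply: eq_bigr => s st; rewrite !permM !tpermD ?nj ?nk ?hjk //.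
  by rewrite (inj_eq hj) eq_sym.
have E2 : \prod_(s | s != t) Fv (i s) ((tperm p0 (k t) * x)%g (j s))
    ((tperm p0 (k t) * x)%g (k s)) = G.
  apply: eq_bigr => s st; rewrite !permM !tpermD ?nj ?nk //.
    by rewrite (inj_eq hk) eq_sym.
  by rewrite eq_sym hjk.
rewrite E1 E2 -mulrDl; congr (_ * _).
have a1 : (tperm p0 (j t) * x)%g (j t) = x p0 by rewrite permM tpermR.
have a2 : (tperm p0 (j t) * x)%g (k t) = x (k t)
  by rewrite permM tpermD ?nk // eq_sym hjk.
have a3 : (tperm p0 (k t) * x)%g (j t) = x (j t)
  by rewrite permM tpermD ?nj // eq_sym hjk.
have a4 : (tperm p0 (k t) * x)%g (k t) = x p0 by rewrite permM tpermR.
rewrite a1 a2 a3 a4; apply: Fv_sum; rewrite (inj_eq perm_inj) ?nj ?nk ?hjk //.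
Qed.

End S.

Theorem proposition1 (R : realType) (n m : nat)
    (i j k : 'I_m -> 'I_n) :
  (3 <= n)%N -> (1 <= m)%N ->
  injective i ->
  injective j -> injective k -> (forall t t', j t != k t') ->
  (forall t, nat_of_ord (j t) != 0%N) -> (forall t, nat_of_ord (k t) != 0%N) ->
  is_eigenfunction (@star_adj n) (fIP R i j k) (n%:R - m%:R - 1).
Proof.
move=> n3 m1 hi hj hk hjk hj0 hk0.
have n0 : (0 < n)%N by apply: leq_trans n3.
split.
  have [s Hs] := @witness n m i j hi hj; exists s.
  rewrite fIP_prod (eq_bigr (fun _ => -1)); last by move=> t _; rewrite /Fv Hs eqxx.
  by rewrite prodr_const signr_eq0.
move=> x; rewrite (@nbr_sum R n n0).
set p0 := Ordinal n0.
set fx := fIP R i j k x.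
set A := [set j t | t in [set: 'I_m]].
set B := [set k t | t in [set: 'I_m]].
have -> : \sum_(p | p != p0) fIP R i j k (tperm p0 p * x)%g =
   \sum_(p | p != p0) fx + \sum_(p | p != p0) (fIP R i j k (tperm p0 p * x)%g - fx).
  by rewrite -big_split; apply: eq_bigr => p _; rewrite /= addrCA subrr addr0.
rewrite sumr_const cardC1 card_ord.
rewrite (bigID (fun p => (p \in A) || (p \in B))) /=.
rewrite [X in _ + (_ + X)]big1 ?addr0; last first.
  move=> p /andP [_ hp]; rewrite negb_or in hp; case/andP: hp => hA hB.
  rewrite (@step_other R n m i j k n0 hj0 hk0) ?subrr // => t.
    by apply: contraNneq hA => <-; apply: imset_f; rewrite inE.
  by apply: contraNneq hB => <-; apply: imset_f; rewrite inE.
rewrite (eq_bigl [predU A & B]); last first.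
  move=> p /=; case: (boolP (p \in A)) => [/imsetP [t _ ->]|_] /=.
    by rewrite andbT eq_sym nj.
  case: (boolP (p \in B)) => [/imsetP [t _ ->]|_] /=.
    by rewrite andbT eq_sym nk.
  by rewrite andbF.
rewrite bigU; last first.
  rewrite disjoint_subset; apply/subsetP => p /imsetP [t _ ->].
  rewrite inE; apply/imsetP => [[t' _ e]].
  by move: (hjk t t'); rewrite e eqxx.
rewrite (big_imset _ (in2W hj)) (big_imset _ (in2W hk)) /=.
rewrite -big_split /= (eq_bigr (fun _ => - fx)); last first.
  move=> t _; rewrite addrACA (@step_pair R n m i j k hj hk hjk n0 hj0 hk0).
  by rewrite addrA subrr add0r.
rewrite sumr_const cardsT card_ord.
have hn : n%:R = (n.-1)%:R + 1 :> R by rewrite natr1 prednK.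
rewrite hn -(mulr_natr fx) -(mulr_natr (- fx)); ring.
Qed.
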